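(* Let $n,d\ge 1$. For $k=1,2,\ldots$ let $\mathbf M_k\in\mathbb R^{n\times n}$ be invertible, and for $k=0,1,2,\ldots$ let $\mathbf H_k\in\mathbb R^{d\times n}$ and let $\mathbf R_k\in\mathbb R^{d\times d}$ be symmetric positive definite; put ${\boldsymbol\Omega}_k=\mathbf H_k^{\mathrm T}\mathbf R_k^{-1}\mathbf H_k$. For $k\ge l\ge 0$ let $\mathbf M_{k:l}=\mathbf M_k\mathbf M_{k-1}\cdots\mathbf M_{l+1}$ (with $\mathbf M_{k:k}=\mathbf I_n$). Let $\mathbf P_0\in\mathbb R^{n\times n}$ be symmetric positive semi-definite (possibly singular), and define $\mathbf P_k$ by the perfect-model Kalman filter forecast recurrence $$\mathbf P_{k+1}=\mathbf M_{k+1}\big(\mathbf I_n+\mathbf P_k{\boldsymbol\Omega}_k\big)^{-1}\mathbf P_k\mathbf M_{k+1}^{\mathrm T},\qquad k\ge 0.$$ Define ${\boldsymbol\Gamma}_k=\sum_{l=0}^{k-1}\mathbf M_{k:l}^{-\mathrm T}{\boldsymbol\Omega}_l\mathbf M_{k:l}^{-1}$ and ${\boldsymbol\Theta}_k=\mathbf M_{k:0}^{\mathrm T}{\boldsymbol\Gamma}_k\mathbf M_{k:0}=\sum_{l=0}^{k-1}\mathbf M_{l:0}^{\mathrm T}{\boldsymbol\Omega}_l\mathbf M_{l:0}$. Then for every $k\ge 0$, $$\mathbf P_k=\mathbf M_{k:0}\mathbf P_0\mathbf M_{k:0}^{\mathrm T}\big(\mathbf I_n+{\boldsymbol\Gamma}_k\mathbf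 M_{k:0}\mathbf P_0\mathbf M_{k:0}^{\mathrm T}\big)^{-1}=\mathbf M_{k:0}\mathbf P_0\big(\mathbf I_n+{\boldsymbol\Theta}_k\mathbf P_0\big)^{-1}\mathbf M_{k:0}^{\mathrm T}.$$
   Context: Empty sums are zero, so ${\boldsymbol\Gamma}_0={\boldsymbol\Theta}_0=\mathbf 0$. *)

(* Defs.v *)
From HB Require Import structures.
From mathcomp Require Import all_boot all_order all_algebra.
Set Implicit Arguments. Unset Strict Implicit. Unset Printing Implicit Defensive.
Import Order.TTheory GRing.Theory Num.Theory.
Local Open Scope ring_scope.

Definition symmetric_mx (R : realFieldType) (n : nat) (A : 'M[R]_n) : Prop :=
  A^T = A.

Definition posdef_mx (R : realFieldType) (n : nat) (A : 'M[R]_n) : Prop :=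
  symmetric_mx A /\ forall x : 'cV[R]_n, x != 0 -> 0 < (x^T *m A *m x) 0 0.

Definition psd_mx (R : realFieldType) (n : nat) (A : 'M[R]_n) : Prop :=
  symmetric_mx A /\ forall x : 'cV[R]_n, 0 <= (x^T *m A *m x) 0 0.

(* M_{k:l} = M_k M_{k-1} ... M_{l+1}, and M_{k:l} = I when k <= l *)
Fixpoint Mprod (R : realFieldType) (n : nat) (M : nat -> 'M[R]_n) (k l : nat)
  : 'M[R]_n :=
  match k with
  | 0 => 1%:M
  | k'.+1 => if (k'.+1 <= l)%N then 1%:M else M k'.+1 *m Mprod M k' l
  end.

Definition Omega (R : realFieldType) (n d : nat) (H : nat -> 'M[R]_(d, n))
  (Rc : nat -> 'M[R]_d) (k : nat) : 'M[R]_n :=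
  (H k)^T *m invmx (Rc k) *m H k.

Definition Gamma (R : realFieldType) (n d : nat) (M : nat -> 'M[R]_n)
  (H : nat -> 'M[R]_(d, n)) (Rc : nat -> 'M[R]_d) (k : nat) : 'M[R]_n :=
  \sum_(l < k) (invmx (Mprod M k l))^T *m Omega H Rc l *m invmx (Mprod M k l).

Definition Theta (R : realFieldType) (n d : nat) (M : nat -> 'M[R]_n)
  (H : nat -> 'M[R]_(d, n)) (Rc : nat -> 'M[R]_d) (k : nat) : 'M[R]_n :=
  (Mprod M k 0)^T *m Gamma M H Rc k *m Mprod M k 0.

(* Main.v *)
Require Import Defs.
From HB Require Import structures.
From mathcomp Require Import all_boot all_order all_algebra.
From mathcomp Require Import ring lra.
Import Order.TTheory GRing.Theory Num.Theory.
Local Open Scope ring_scope.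
Set Implicit Arguments. Unset Strict Implicit.

Section Aux.
Variable R : realFieldType.
Variable n : nat.
Implicit Types A S T : 'M[R]_n.

Definition bf A (u w : 'cV[R]_n) : R := (u^T *m A *m w) 0 0.

Lemma bfD1 A u v w : bf A (u + v) w = bf A u w + bf A v w.
Proof. by rewrite /bf linearD /= !mulmxDl mxE. Qed.
Lemma bfD2 A u v w : bf A u (v + w) = bf A u v + bf A u w.
Proof. by rewrite /bf !mulmxDr mxE. Qed.
Lemma bfZ1 A t u w : bf A (t *: u) w = t * bf A u w.
Proof. by rewrite /bf linearZ /= -!scalemxAl mxE. Qed.
Lemma bfZ2 A t u w : bf A u (t *: w) = t * bf A u w.
Proof. by rewrite /bf -!scalemxAr mxE. Qed.
Lemma bfC A u w (hs : A^T = A) : bf A u w = bf A w u.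
Proof.
rewrite /bf.
have -> : (u^T *m A *m w) 0 0 = (u^T *m A *m w)^T 0 0 by rewrite [RHS]mxE.
by rewrite !trmx_mul trmxK hs mulmxA.
Qed.

Lemma sumsq0 (z : 'cV[R]_n) : (z^T *m z) 0 0 = 0 -> z = 0.
Proof.
rewrite mxE => h; apply/matrixP => i j; rewrite (ord1 j) [RHS]mxE.
have hn : forall k : 'I_n, true -> 0 <= z^T 0 k * z k 0.
  by move=> k _; rewrite mxE -expr2 sqr_ge0.
have := psumr_eq0P hn h (i:=i) isT.
by rewrite mxE => /eqP; rewrite mulf_eq0 orbb => /eqP.
Qed.

Lemma psd_ker A (y : 'cV[R]_n) (hs : A^T = A) (hp : forall x, 0 <= bf A x x)
  (h0 : bf A y y = 0) : A *m y = 0.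
Proof.
 set z := A *m y.
have ha : bf A z y = (z^T *m z) 0 0 by rewrite /bf -mulmxA.
set a := bf A z y in ha; set c := bf A z z.
have hc : 0 <= c := hp z.
have key : forall s0, 0 <= 2 * s0 * a + s0 ^+ 2 * c.
  move=> s0; have := hp (y + s0 *: z).
  rewrite !bfD1 !bfD2 !bfZ1 !bfZ2 h0 (bfC y z hs) -/a -/c.
  by move=> H; apply: le_trans H _; rewrite le_eqVlt; apply/orP; left; apply/eqP; ring.
have c1 : c + 1 != 0 by rewrite lt0r_neq0 // ltr_wpDl.
have := key (- a / (c + 1)).
have -> : 2 * (- a / (c + 1)) * a + (- a / (c + 1)) ^+ 2 * c =
    - (a ^+ 2 * (c + 2)) / (c + 1) ^+ 2 by field.
rewrite pmulr_lge0 ?invr_gt0 ?exprn_gt0 ?(lt_le_trans ltr01) ?lerDr // => H.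
have H2 : a ^+ 2 * (c + 2) = 0.
  apply/eqP; rewrite eq_le -oppr_ge0 H /= mulr_ge0 ?sqr_ge0 //.
  by apply: addr_ge0.
move: H2 => /eqP; rewrite mulf_eq0 sqrf_eq0 => /orP [/eqP ha0|].
  by apply: sumsq0; rewrite -ha.
by rewrite paddr_eq0 // => /andP [_]; rewrite pnatr_eq0.
Qed.

Lemma unit_psd S T (hS : S^T = S) (pS : forall x, 0 <= bf S x x)
  (hT : T^T = T) (pT : forall x, 0 <= bf T x x) : 1%:M + S *m T \in unitmx.
Proof.
rewrite -row_free_unit -kermx_eq0; apply/eqP/row_matrixP => i; rewrite row0.
set v := row i _.
have hv0 : v *m (1%:M + S *m T) = 0 by rewrite /v -row_mul mulmx_ker row0.
have hv : v = - (v *m S *m T).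
  by apply/eqP; rewrite -addr_eq0 -mulmxA -[v in v + _]mulmx1 -mulmxDr hv0.
set w := (v *m S)^T.
have e1 : bf S v^T v^T = - bf T w w.
  rewrite /bf /w trmxK trmx_mul hS.
  have -> : v *m S *m v^T = v *m S *m (- (v *m S *m T))^T by rewrite -hv.
  have mN : forall X : 'M[R]_1, (- X) 0 0 = - X 0 0 by move=> X; rewrite mxE.
  by rewrite linearN /= mulmxN mN !trmx_mul ?trmxK hS hT !mulmxA.
have hw : bf T w w = 0.
  apply/eqP; rewrite eq_le pT andbT -oppr_ge0 -e1; exact: pS.
have := psd_ker hT pT hw.
move/(congr1 trmx); rewrite trmx_mul hT /w trmxK linear0 => h.
by rewrite hv h oppr0.
Qed.

Lemma push Q T : 1%:M + T *m Q \in unitmx -> 1%:M + Q *m T \in unitmx ->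
  Q *m invmx (1%:M + T *m Q) = invmx (1%:M + Q *m T) *m Q.
Proof.
move=> u1 u2.
have e : (1%:M + Q *m T) *m Q = Q *m (1%:M + T *m Q).
  by rewrite mulmxDl mulmxDr mul1mx mulmx1 mulmxA.
have -> : Q *m invmx (1%:M + T *m Q) =
  invmx (1%:M + Q *m T) *m ((1%:M + Q *m T) *m Q) *m invmx (1%:M + T *m Q).
  by rewrite mulKmx.
by rewrite e mulmxA mulmxK.
Qed.

Lemma step A Q T Om : A \in unitmx ->
  1%:M + T *m Q \in unitmx -> 1%:M + Q *m T \in unitmx ->
  1%:M + (T + A^T *m Om *m A) *m Q \in unitmx ->
  1%:M + Q *m (T + A^T *m Om *m A) \in unitmx ->
  (1%:M + (A *m Q *m invmx (1%:M + T *m Q) *m A^T) *m Om) \in unitmx /\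
  invmx (1%:M + (A *m Q *m invmx (1%:M + T *m Q) *m A^T) *m Om)
    *m (A *m Q *m invmx (1%:M + T *m Q) *m A^T)
  = A *m Q *m invmx (1%:M + (T + A^T *m Om *m A) *m Q) *m A^T.
Proof.
move=> uA u1 u2 u3 u4.
set W := A^T *m Om *m A in u3 u4 *.
set X := Q *m invmx (1%:M + T *m Q).
have eY : A *m Q *m invmx (1%:M + T *m Q) *m A^T = A *m X *m A^T.
  by rewrite /X !mulmxA.
rewrite eY.
have eU : 1%:M + A *m X *m A^T *m Om =
    A *m (invmx (1%:M + Q *m T) *m (1%:M + Q *m (T + W))) *m invmx A.
  rewrite (mulmxDr Q T W) addrA mulmxDr (mulVmx u2) mulmxDr mulmx1 mulmxDl (mulmxV uA).
  congr (_ + _); rewrite /X (push u1 u2) /W !mulmxA mulmxK //.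
have uU : 1%:M + A *m X *m A^T *m Om \in unitmx.
  by rewrite eU !unitmx_mul !unitmx_inv uA u2 u4.
split => //.
set X' := Q *m invmx (1%:M + (T + W) *m Q).
have eX : X = X' + X *m W *m X'.
  have h1 : X *m (1%:M + (T + W) *m Q) = Q + X *m W *m Q.
    by rewrite (mulmxDl T W Q) addrA mulmxDr /X mulmxKV // mulmxA.
  rewrite -[X in LHS](mulmxK u3) h1 mulmxDl /X' -!mulmxA.
  by rewrite !mulmxA.
have eZ : (1%:M + A *m X *m A^T *m Om) *m (A *m X' *m A^T) = A *m X *m A^T.
  rewrite mulmxDl mul1mx [in RHS]eX mulmxDr mulmxDl.
  by congr (_ + _); rewrite /W !mulmxA.
have := congr1 (mulmx (invmx (1%:M + A *m X *m A^T *m Om))) eZ.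
rewrite mulKmx // => <-; by rewrite /X' !mulmxA.
Qed.
End Aux.

Lemma psd0 (R : realFieldType) n : psd_mx (0 : 'M[R]_n).
Proof. by split; [rewrite /symmetric_mx trmx0 | move=> x; rewrite mulmx0 mul0mx mxE]. Qed.

Lemma psdD (R : realFieldType) n (A B : 'M[R]_n) : psd_mx A -> psd_mx B -> psd_mx (A + B).
Proof.
move=> [sA pA] [sB pB]; split; first by rewrite /symmetric_mx linearD /= sA sB.
by move=> x; rewrite mulmxDr mulmxDl mxE addr_ge0.
Qed.

Lemma psd_congr (R : realFieldType) m k (X : 'M[R]_m) (B : 'M[R]_(m, k)) :
  psd_mx X -> psd_mx (B^T *m X *m B).
Proof.
move=> [sX pX]; split; first by rewrite /symmetric_mx !trmx_mul trmxK sX mulmxA.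
move=> x; have := pX (B *m x); by rewrite trmx_mul !mulmxA.
Qed.

Lemma posdef_unit (R : realFieldType) n (A : 'M[R]_n) : posdef_mx A -> A \in unitmx.
Proof.
move=> [sA pA]; rewrite -row_free_unit -kermx_eq0; apply/eqP/row_matrixP => i.
rewrite row0; set v := row i _.
have hv0 : v *m A = 0 by rewrite /v -row_mul mulmx_ker row0.
apply/eqP; apply/negPn/negP => hv.
have hx : v^T != 0 by apply: contra hv => /eqP h; rewrite -[v]trmxK h linear0.
have := pA _ hx; by rewrite trmxK hv0 mul0mx mxE ltxx.
Qed.

Lemma posdef_inv_psd (R : realFieldType) n (A : 'M[R]_n) : posdef_mx A -> psd_mx (invmx A).
Proof.
move=> hA; have uA := posdef_unit hA; case: hA => sA pA.
split; first by rewrite /symmetric_mx trmx_inv sA.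
move=> x; set y := invmx A *m x.
have -> : x^T *m invmx A *m x = y^T *m A *m y.
  by rewrite /y trmx_mul trmx_inv sA -!mulmxA (mulmxA A) mulmxV // mul1mx.
have [->|hy] := eqVneq y 0; first by rewrite mulmx0 mxE.
exact: ltW (pA _ hy).
Qed.

Lemma Mprod_kk (R : realFieldType) n (M : nat -> 'M[R]_n) k : Mprod M k k = 1%:M.
Proof. by case: k => //= k; rewrite leqnn. Qed.

Lemma Mprod_S (R : realFieldType) n (M : nat -> 'M[R]_n) k l : (l <= k)%N ->
  Mprod M k.+1 l = M k.+1 *m Mprod M k l.
Proof. by move=> h /=; rewrite ltnNge h. Qed.

Lemma Mprod_split (R : realFieldType) n (M : nat -> 'M[R]_n) k l : (l <= k)%N ->
  Mprod M k 0 = Mprod M k l *m Mprod M l 0.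
Proof.
elim: k l => [|k IH] l hl.
  by move: hl; rewrite leqn0 => /eqP ->; rewrite mul1mx.
have [->|hlk] := eqVneq l k.+1; first by rewrite Mprod_kk mul1mx.
have hl' : (l <= k)%N by rewrite -ltnS ltn_neqAle hlk hl.
by rewrite !Mprod_S // (IH l hl') mulmxA.
Qed.

Lemma Mprod_unit (R : realFieldType) n (M : nat -> 'M[R]_n) k l :
  (forall k, (0 < k)%N -> M k \in unitmx) -> Mprod M k l \in unitmx.
Proof.
move=> hM; elim: k => [|k IH] /=; first exact: unitmx1.
by case: ifP => _; rewrite ?unitmx1 // unitmx_mul hM.
Qed.

Unset Implicit Arguments.

Theorem mainTheorem1 (R : realFieldType) (n d : nat)
  (M : nat -> 'M[R]_n) (H : nat -> 'M[R]_(d, n)) (Rc : nat -> 'M[R]_d)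
  (P : nat -> 'M[R]_n) :
  (0 < n)%N -> (0 < d)%N ->
  (forall k, (0 < k)%N -> M k \in unitmx) ->
  (forall k, posdef_mx (Rc k)) ->
  psd_mx (P 0) ->
  (forall k, P k.+1 =
     M k.+1 *m invmx (1%:M + P k *m Omega H Rc k) *m P k *m (M k.+1)^T) ->
  forall k : nat,
    Theta M H Rc k =
      \sum_(l < k) (Mprod M l 0)^T *m Omega H Rc l *m Mprod M l 0 /\
    (1%:M + Gamma M H Rc k *m (Mprod M k 0 *m P 0 *m (Mprod M k 0)^T))
      \in unitmx /\
    (1%:M + Theta M H Rc k *m P 0) \in unitmx /\
    P k = Mprod M k 0 *m P 0 *m (Mprod M k 0)^T *m
          invmx (1%:M + Gamma M H Rc k *m (Mprod M k 0 *m P 0 *m (Mprod M k 0)^T)) /\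
    P k = Mprod M k 0 *m P 0 *m invmx (1%:M + Theta M H Rc k *m P 0)
          *m (Mprod M k 0)^T.
Proof.
move=> _ _ hM hR hP0 hrec.
have Bu : forall k l, Mprod M k l \in unitmx by move=> k l; exact: Mprod_unit.
have Opsd : forall l, psd_mx (Omega H Rc l).
  by move=> l; apply: psd_congr; apply: posdef_inv_psd.
set Ts := fun k => \sum_(l < k) (Mprod M l 0)^T *m Omega H Rc l *m Mprod M l 0.
have hTh : forall k, Theta M H Rc k = Ts k.
  move=> k; rewrite /Theta /Gamma /Ts mulmx_sumr mulmx_suml; apply: eq_bigr => l _.
  rewrite (Mprod_split M (ltnW (ltn_ord l))) trmx_mul.
  set B := Mprod M k l; set A := Mprod M l 0.
  have uB : B \in unitmx := Bu k l.
  have e : B^T *m (invmx B)^T = 1%:M by rewrite -trmx_mul mulVmx // trmx1.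
  rewrite !mulmxA -(mulmxA A^T B^T) e mulmx1.
  by rewrite -!mulmxA mulKmx.
have TS : forall k, Ts k.+1 = Ts k + (Mprod M k 0)^T *m Omega H Rc k *m Mprod M k 0.
  by move=> k; rewrite /Ts big_ord_recr.
have Tpsd : forall k, psd_mx (Ts k).
  elim=> [|k IH]; first by rewrite /Ts big_ord0; exact: psd0.
  by rewrite TS; apply: psdD => //; apply: psd_congr.
have u1 : forall k, 1%:M + Ts k *m P 0 \in unitmx.
  move=> k; case: (Tpsd k) => s1 p1; case: hP0 => s2 p2; exact: unit_psd.
have u2 : forall k, 1%:M + P 0 *m Ts k \in unitmx.
  move=> k; case: (Tpsd k) => s1 p1; case: hP0 => s2 p2; exact: unit_psd.
have hP : forall k, P k = Mprod M k 0 *m P 0 *m invmx (1%:M + Ts k *m P 0) *m (Mprod M k 0)^T.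
  elim=> [|k IH].
    by rewrite /Ts /= big_ord0 mul0mx addr0 invmx1 trmx1 mul1mx !mulmx1.
  rewrite hrec IH.
  have u3 := u1 k.+1; have u4 := u2 k.+1; rewrite TS in u3 u4.
  have [_ e] := step (Bu k 0%N) (u1 k) (u2 k) u3 u4.
  rewrite -(mulmxA (M k.+1)) e (Mprod_S M (leq0n k)) -TS trmx_mul !mulmxA //.
move=> k; rewrite !hTh; split => //.
set A := Mprod M k 0.
have uA : A \in unitmx := Bu k 0%N.
have e : (invmx A)^T *m A^T = 1%:M by rewrite -trmx_mul mulmxV // trmx1.
have eG : Gamma M H Rc k = (invmx A)^T *m Ts k *m invmx A.
  rewrite -hTh /Theta -/A !mulmxA e mul1mx.
  by rewrite -mulmxA mulmxV // mulmx1.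
have eU : 1%:M + Gamma M H Rc k *m (A *m P 0 *m A^T) =
    (invmx A)^T *m (1%:M + Ts k *m P 0) *m A^T.
  rewrite eG mulmxDr mulmxDl mulmx1 e; congr (_ + _).
  by rewrite !mulmxA -(mulmxA _ (invmx A) A) mulVmx // mulmx1.
have uU : 1%:M + Gamma M H Rc k *m (A *m P 0 *m A^T) \in unitmx.
  by rewrite eU !unitmx_mul !unitmx_tr unitmx_inv uA u1.
split => //; split => //; split; last exact: hP.
rewrite eU hP.
have eZ : A *m P 0 *m invmx (1%:M + Ts k *m P 0) *m A^T *m
    ((invmx A)^T *m (1%:M + Ts k *m P 0) *m A^T) = A *m P 0 *m A^T.
  have e2 : A^T *m (invmx A)^T = 1%:M by rewrite -trmx_mul mulVmx // trmx1.
  by rewrite !mulmxA -(mulmxA _ A^T) e2 mulmx1 mulmxKV.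
by rewrite -[in RHS]eZ mulmxK // !unitmx_mul !unitmx_tr unitmx_inv uA u1.
Qed.
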